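(* Let $N\ge1$ and let $\mathbf a\in\mathbb{R}^{N+1}$ have either all coordinates strictly positive or all coordinates strictly negative. Let $\mathcal C_{\mathbf a}$, $\oplus_{\mathcal C_{\mathbf a}}$ and $\mathbf e_{\mathbf a}=\mathcal C_{\mathbf a}(\mathbf 1)$ be as in the context. Then the logarithm map $\mathrm{Log}_{\mathcal C_{\mathbf a}}:\Delta_N^0\to T_{\mathbf e_{\mathbf a}}\Delta_N^0$ of the Lie group $(\Delta_N^0,\oplus_{\mathcal C_{\mathbf a}})$ is given, for $\boldsymbol\lambda\in\Delta_N^0$ and $i=1,\dots,N+1$, by $$\big(\mathrm{Log}_{\mathcal C_{\mathbf a}}(\boldsymbol\lambda)\big)_i=(\mathbf e_{\mathbf a})_i\left(\ln\lambda_i-\frac{a_i}{\sum_{k=1}^{N+1}a_k(\mathbf e_{\mathbf a})_k}\sum_{j=1}^{N+1}(\mathbf e_{\mathbf a})_j\ln\lambda_j\right).$$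
   Context: $\mathbb{R}^{N+1}_{>0}$ is the open positive orthant, an abelian Lie group under componentwise multiplication $\mathbf x\oplus\mathbf y=(x_1y_1,\dots,x_{N+1}y_{N+1})$ with neutral element $\mathbf 1=(1,\dots,1)$. $\Delta_N^0=\{\boldsymbol\lambda\in\mathbb{R}^{N+1}_{>0}\mid\sum_i\lambda_i=1\}$. For $\mathbf a$ with all coordinates of the same strict sign and $\mathbf x\in\mathbb{R}^{N+1}_{>0}$, let $t_{\mathbf a}(\mathbf x)$ be the unique real solution $t$ of $\sum_{i=1}^{N+1}x_ie^{a_it}=1$, and set $\mathcal C_{\mathbf a}(\mathbf x)=(x_1e^{a_1t_{\mathbf a}(\mathbf x)},\dots,x_{N+1}e^{a_{N+1}t_{\mathbf a}(\mathbf x)})\in\Delta_N^0$ (the unique point of $\Delta_N^0$ on the curve $\{(x_ie^{ta_i})_i\mid t\in\mathbb{R}\}$). The group operation on $\Delta_N^0$ is $\boldsymbol\lambda\oplus_{\mathcal C_{\mathbf a}}\boldsymbol\mu=\mathcal C_{\mathbf a}(\boldsymbol\lambda\oplus\boldsymbol\mu)$; this makes $\Delta_N^0$ an abelian Lie group (isomorphic to the quotient of $(\mathbb{R}^{N+1}_{>0},\oplus)$ by $H_{\mathbf a}=\{(e^{ta_i})_i\mid t\in\mathbb{R}\}$) with neutral element $\mathbf e_{\mathbf a}=\mathcal C_{\mathbf a}(\mathbf 1)$ and Lie algebra identified with $T_{\mathbf e_{\mathbf a}}\Delta_N^0=\{\boldsymbol\xi\in\mathbb{R}^{N+1}\mid\sum_i\xi_i=0\}$.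 Its Lie group exponential map $\mathrm{Exp}_{\mathcal C_{\mathbf a}}:T_{\mathbf e_{\mathbf a}}\Delta_N^0\to\Delta_N^0$ is a global diffeomorphism, and $\mathrm{Log}_{\mathcal C_{\mathbf a}}$ denotes its inverse. *)

(* Defs.v *)
(* concrete reals R, Coquelicot derivatives.
   Vectors of R^{N+1} are functions nat -> R, coordinate i (paper index i+1)
   for i = 0..N; values at i > N are irrelevant. *)
From Stdlib Require Import Reals ClassicalEpsilon.
From Coquelicot Require Import Coquelicot.
Open Scope R_scope.

Definition sumN (N : nat) (f : nat -> R) : R := sum_f_R0 f N.

Definition same_strict_sign (N : nat) (a : nat -> R) : Prop :=
  (forall i, (i <= N)%nat -> 0 < a i) \/ (forall i, (i <= N)%nat -> a i < 0).

Definition pos_orthant (N : nat) (x : nat -> R) : Prop :=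
  forall i, (i <= N)%nat -> 0 < x i.
Definition simplex0 (N : nat) (l : nat -> R) : Prop :=
  pos_orthant N l /\ sumN N l = 1.

Definition tangent0 (N : nat) (xi : nat -> R) : Prop := sumN N xi = 0.

Definition t_a (N : nat) (a x : nat -> R) : R :=
  epsilon (inhabits 0) (fun t => sumN N (fun i => x i * exp (a i * t)) = 1).

Definition C_a (N : nat) (a x : nat -> R) : nat -> R :=
  fun i => x i * exp (a i * t_a N a x).

Definition opC (N : nat) (a l m : nat -> R) : nat -> R :=
  C_a N a (fun i => l i * m i).
Definition e_a (N : nat) (a : nat -> R) : nat -> R := C_a N a (fun _ => 1).

Definition one_param_subgroup (N : nat) (a : nat -> R) (g : R -> nat -> R) : Prop :=
  (forall t, simplex0 N (g t)) /\
  (forall i, (i <= N)%nat -> g 0 i = e_a N a i) /\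
  (forall s t i, (i <= N)%nat -> g (s + t) i = opC N a (g s) (g t) i) /\
  (forall t i, (i <= N)%nat -> ex_derive (fun u => g u i) t).

Definition init_velocity (N : nat) (g : R -> nat -> R) (xi : nat -> R) : Prop :=
  forall i, (i <= N)%nat -> is_derive (fun u => g u i) 0 (xi i).

Definition Exp_is (N : nat) (a xi l : nat -> R) : Prop :=
  (exists g, one_param_subgroup N a g /\ init_velocity N g xi /\
             forall i, (i <= N)%nat -> g 1 i = l i) /\
  (forall g, one_param_subgroup N a g -> init_velocity N g xi ->
             forall i, (i <= N)%nat -> g 1 i = l i).

Definition Log_formula (N : nat) (a l : nat -> R) : nat -> R :=
  fun i => e_a N a i *
    (ln (l i) - a i / sumN N (fun k => a k * e_a N a k) *
                sumN N (fun j => e_a N a j * ln (l j))).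

(* Main.v *)
Require Import Defs.
From Stdlib Require Import Reals Lra Lia ClassicalEpsilon FunctionalExtensionality.
From Coquelicot Require Import Coquelicot.
Open Scope R_scope.

Lemma d_plus f g x df dg : is_derive f x df -> is_derive g x dg ->
  is_derive (fun t => f t + g t) x (df + dg).
Proof. intros; now apply (is_derive_plus f g). Qed.
Lemma d_minus f g x df dg : is_derive f x df -> is_derive g x dg ->
  is_derive (fun t => f t - g t) x (df - dg).
Proof. intros; now apply (is_derive_minus f g). Qed.
Lemma d_mult f g x df dg : is_derive f x df -> is_derive g x dg ->
  is_derive (fun t => f t * g t) x (df * g x + f x * dg).
Proof. intros; apply (is_derive_mult f g); auto. intros; apply Rmult_comm. Qed.
Lemma d_comp f g x df dg : is_derive f (g x) df -> is_derive g x dg ->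
  is_derive (fun t => f (g t)) x (dg * df).
Proof. intros; now apply (is_derive_comp f g). Qed.
Lemma d_const c x : is_derive (fun _ => c) x 0.
Proof. apply (is_derive_const c). Qed.
Lemma d_scal c f x df : is_derive f x df -> is_derive (fun t => c * f t) x (c * df).
Proof. intros H. replace (c*df) with (0 * f x + c * df) by ring.
  apply (d_mult (fun _ => c) f); auto using d_const. Qed.
Lemma d_lin w x : is_derive (fun t => t * w) x w.
Proof. auto_derive; auto; ring. Qed.
Lemma d_id x : is_derive (fun t => t) x 1.
Proof. auto_derive; auto. Qed.
Lemma d_exp f x df : is_derive f x df -> is_derive (fun t => exp (f t)) x (df * exp (f x)).
Proof. intros H. apply (d_comp exp f); auto. apply is_derive_Reals, derivable_pt_lim_exp. Qed.
Lemma d_ln f x df : is_derive f x df -> 0 < f x -> is_derive (fun t => ln (f t)) x (df * / f x).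
Proof. intros H Hp. apply (d_comp ln f); auto. now apply is_derive_ln. Qed.

Lemma d_sum (f : nat -> R -> R) (df : nat -> R) x N :
  (forall i, (i <= N)%nat -> is_derive (f i) x (df i)) ->
  is_derive (fun t => sum_f_R0 (fun i => f i t) N) x (sum_f_R0 df N).
Proof.
  induction N; intros H; simpl.
  - apply H; lia.
  - apply d_plus. apply IHN; intros; apply H; lia. apply H; lia.
Qed.

Lemma sum_pos (f : nat -> R) N : (forall i, (i <= N)%nat -> 0 < f i) -> 0 < sum_f_R0 f N.
Proof. induction N; intros H; simpl. apply H; lia.
  apply Rplus_lt_0_compat. apply IHN; intros; apply H; lia. apply H; lia. Qed.

Lemma sum_lt (f g : nat -> R) N : (forall i, (i <= N)%nat -> f i < g i) ->
  sum_f_R0 f N < sum_f_R0 g N.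
Proof. induction N; intros H; simpl. apply H; lia.
  apply Rplus_lt_compat. apply IHN; intros; apply H; lia. apply H; lia. Qed.

Lemma sum_ge_first (f : nat -> R) N : (forall i, (i <= N)%nat -> 0 <= f i) -> f 0%nat <= sum_f_R0 f N.
Proof. induction N; intros H; simpl. lra.
  assert (0 <= f (S N)) by (apply H; lia).
  assert (f 0%nat <= sum_f_R0 f N) by (apply IHN; intros; apply H; lia). lra. Qed.

Lemma sum_opp (f : nat -> R) N : sum_f_R0 (fun i => - f i) N = - sum_f_R0 f N.
Proof. induction N; simpl; [ring| rewrite IHN; ring]. Qed.

Lemma sum_sign N (a c : nat -> R) : same_strict_sign N a ->
  (forall i, (i <= N)%nat -> 0 < c i) -> sum_f_R0 (fun i => a i * c i) N <> 0.
Proof.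
  intros [Ha|Ha] Hc.
  - apply Rgt_not_eq, sum_pos. intros; apply Rmult_lt_0_compat; auto.
  - assert (0 < sum_f_R0 (fun i => - (a i * c i)) N).
    { apply sum_pos. intros i Hi. specialize (Ha i Hi); specialize (Hc i Hi); nra. }
    rewrite sum_opp in H. lra.
Qed.

Lemma cont_of_derive f x l : is_derive f x l -> continuity_pt f x.
Proof. intros H. apply continuity_pt_filterlim. apply (ex_derive_continuous f). exists l; auto. Qed.

Lemma uniq_t N a x T T' : same_strict_sign N a -> pos_orthant N x ->
  sumN N (fun i => x i * exp (a i * T)) = 1 ->
  sumN N (fun i => x i * exp (a i * T')) = 1 -> T = T'.
Proof.
  unfold sumN, pos_orthant. intros Hs Hx H1 H2.
  assert (K : forall U U', U < U' -> sum_f_R0 (fun i => x i * exp (a i * U)) N <>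
                                    sum_f_R0 (fun i => x i * exp (a i * U')) N).
  { intros U U' HU. destruct Hs as [Ha|Ha].
    - apply Rlt_not_eq, sum_lt. intros i Hi. apply Rmult_lt_compat_l; auto.
      apply exp_increasing. specialize (Ha i Hi). nra.
    - apply Rgt_not_eq, sum_lt. intros i Hi. apply Rmult_lt_compat_l; auto.
      apply exp_increasing. specialize (Ha i Hi). nra. }
  destruct (Rtotal_order T T') as [h|[h|h]]; auto; exfalso.
  - apply (K _ _ h); congruence.
  - apply (K _ _ h); congruence.
Qed.

Lemma single_small a x eps : 0 < a -> 0 < x -> 0 < eps ->
  exists T, forall T', T' <= T -> x * exp (a * T') < eps.
Proof.
  intros Ha Hx He. exists (ln (eps / x) / a - 1). intros T' HT.
  assert (a * T' < ln (eps / x)).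
  { assert (a * T' <= a * (ln (eps / x) / a - 1)) by (apply Rmult_le_compat_l; lra).
    replace (a * (ln (eps / x) / a - 1)) with (ln (eps/x) - a) in H by (field; lra). lra. }
  apply exp_increasing in H. rewrite exp_ln in H.
  2: { apply Rdiv_lt_0_compat; auto. }
  apply Rmult_lt_compat_l with (r := x) in H; auto.
  replace (x * (eps / x)) with eps in H by (field; lra). lra.
Qed.

Lemma sum_small N (a x : nat -> R) : (forall i, (i <= N)%nat -> 0 < a i) ->
  (forall i, (i <= N)%nat -> 0 < x i) -> forall eps, 0 < eps ->
  exists T, forall T', T' <= T -> sum_f_R0 (fun i => x i * exp (a i * T')) N < eps.
Proof.
  induction N; intros Ha Hx eps He.
  - destruct (single_small (a 0%nat) (x 0%nat) eps) as [T HT]; auto.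
    exists T; intros; simpl; auto.
  - destruct (IHN) with (eps := eps/2) as [T1 H1]; auto; try lra.
    destruct (single_small (a (S N)) (x (S N)) (eps/2)) as [T2 H2]; auto; try lra.
    exists (Rmin T1 T2). intros T' HT. simpl.
    assert (T' <= T1) by (eapply Rle_trans; [exact HT| apply Rmin_l]).
    assert (T' <= T2) by (eapply Rle_trans; [exact HT| apply Rmin_r]).
    specialize (H1 T' H). specialize (H2 T' H0). lra.
Qed.

Lemma exists_t_pos N (a x : nat -> R) : (forall i, (i <= N)%nat -> 0 < a i) ->
  pos_orthant N x -> exists T, sumN N (fun i => x i * exp (a i * T)) = 1.
Proof.
  intros Ha Hx. unfold pos_orthant in Hx. unfold sumN.
  destruct (sum_small N a x Ha Hx 1) as [T1 H1]; [lra|].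
  set (T2 := (1 - ln (x 0%nat)) / a 0%nat).
  set (f := fun T => sum_f_R0 (fun i => x i * exp (a i * T)) N - 1).
  assert (Hc : continuity f).
  { intros T. eapply cont_of_derive.
    unfold f. apply d_minus; [|apply d_const].
    apply (d_sum (fun i T => x i * exp (a i * T))). intros i Hi.
    apply (d_mult (fun _ => x i) (fun T => exp (a i * T))). apply d_const.
    apply (d_exp (fun T => a i * T)). apply (d_scal (a i) (fun t => t)). apply (d_id T). }
  assert (Hlo : f (Rmin T1 (T2 - 1)) < 0).
  { unfold f. specialize (H1 (Rmin T1 (T2 - 1)) (Rmin_l _ _)). lra. }
  assert (Hhi : 0 < f T2).
  { unfold f.
    assert (x 0%nat * exp (a 0%nat * T2) <= sum_f_R0 (fun i => x i * exp (a i * T2)) N).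
    { apply (sum_ge_first (fun i => x i * exp (a i * T2))). intros i Hi.
      apply Rlt_le, Rmult_lt_0_compat; [apply Hx; lia | apply exp_pos]. }
    assert (H0a : 0 < a 0%nat) by (apply Ha; lia).
    assert (H0x : 0 < x 0%nat) by (apply Hx; lia).
    replace (a 0%nat * T2) with (1 + - ln (x 0%nat)) in H
      by (unfold T2; field; lra).
    rewrite exp_plus, exp_Ropp, exp_ln in H; auto.
    replace (x 0%nat * (exp 1 * / x 0%nat)) with (exp 1) in H by (field; lra).
    assert (He1 : exp 0 < exp 1) by (apply exp_increasing; lra). rewrite exp_0 in He1.
    lra. }
  assert (Rmin T1 (T2 - 1) < T2).
  { eapply Rle_lt_trans; [apply Rmin_r| lra]. }
  destruct (IVT f _ _ Hc H Hlo Hhi) as [z [_ Hz]].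
  exists z. unfold f in Hz. lra.
Qed.

Lemma exists_t N (a x : nat -> R) : same_strict_sign N a ->
  pos_orthant N x -> exists T, sumN N (fun i => x i * exp (a i * T)) = 1.
Proof.
  intros [Ha|Ha] Hx.
  - now apply exists_t_pos.
  - destruct (exists_t_pos N (fun i => - a i) x) as [U HU]; auto.
    { intros i Hi; specialize (Ha i Hi); lra. }
    exists (- U). rewrite <- HU. unfold sumN. apply sum_eq. intros i Hi.
    f_equal. f_equal. ring.
Qed.

Lemma t_a_spec N a x : same_strict_sign N a -> pos_orthant N x ->
  sumN N (fun i => x i * exp (a i * t_a N a x)) = 1.
Proof.
  intros Hs Hx. unfold t_a. apply epsilon_spec. now apply exists_t.
Qed.

Lemma cont_eps f x : continuity_pt f x -> forall eps, 0 < eps ->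
  exists d, 0 < d /\ forall y, Rabs (y - x) < d -> Rabs (f y - f x) < eps.
Proof.
  intros H eps He. destruct (H eps He) as [d [Hd Hy]]. exists d; split; auto.
  intros y Hyd. destruct (Req_dec y x) as [->|Hne].
  - rewrite Rminus_diag, Rabs_R0; auto.
  - apply (Hy y). split. split. exact I. auto. exact Hyd.
Qed.

Lemma eps_cont f x : (forall eps, 0 < eps ->
  exists d, 0 < d /\ forall y, Rabs (y - x) < d -> Rabs (f y - f x) < eps) -> continuity_pt f x.
Proof.
  intros H eps He. destruct (H eps He) as [d [Hd Hy]]. exists d; split; auto.
  intros y [_ Hyd]. apply Hy. exact Hyd.
Qed.

Definition Ef (x : R) : R := if Req_EM_T x 0 then 1 else (exp x - 1) / x.

Lemma Ef_eq x : exp x - 1 = x * Ef x.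
Proof. unfold Ef. destruct (Req_EM_T x 0) as [->|h]. rewrite exp_0; ring. field; auto. Qed.

Lemma Ef_pos x : 0 < Ef x.
Proof.
  unfold Ef. destruct (Req_EM_T x 0) as [->|h]. lra.
  destruct (Rtotal_order x 0) as [hx|[hx|hx]]; [|contradiction|].
  - assert (exp x < exp 0) by (apply exp_increasing; lra). rewrite exp_0 in H.
    assert (/ x < 0) by (apply Rinv_lt_0_compat; lra). unfold Rdiv. nra.
  - assert (exp 0 < exp x) by (apply exp_increasing; lra). rewrite exp_0 in H.
    assert (0 < / x) by (apply Rinv_0_lt_compat; lra). unfold Rdiv. nra.
Qed.

Lemma Ef_cont0 : continuity_pt Ef 0.
Proof.
  apply eps_cont. intros eps He. destruct (derivable_pt_lim_exp_0 eps He) as [d Hd].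
  exists d; split. apply cond_pos. intros y Hy. rewrite Rminus_0_r in Hy.
  unfold Ef at 2. destruct (Req_EM_T 0 0) as [_|h]; [|lra].
  unfold Ef. destruct (Req_EM_T y 0) as [->|h].
  - rewrite Rminus_diag, Rabs_R0; auto.
  - specialize (Hd y h Hy). rewrite Rplus_0_l, exp_0 in Hd. exact Hd.
Qed.

Lemma dq (f n k : R -> R) (x dn : R) : (forall t, f t - f x = n t / k t) -> n x = 0 ->
  is_derive n x dn -> continuity_pt k x -> k x <> 0 -> is_derive f x (dn / k x).
Proof.
  intros Hf Hn Hd Hk Hkx. apply is_derive_Reals.
  apply (derivable_pt_lim_D_in f (fun _ => dn / k x) x).
  apply is_derive_Reals in Hd.
  apply (derivable_pt_lim_D_in n (fun _ => dn) x) in Hd.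
  unfold D_in in *.
  assert (L := limit_mul _ _ _ _ _ _ Hd (limit_inv _ _ _ _ Hk Hkx)).
  replace (fun y => (f y - f x) / (y - x)) with (fun y => (n y - n x) / (y - x) * / k y).
  exact L.
  apply functional_extensionality; intros y. rewrite Hf, Hn. unfold Rdiv; ring.
Qed.

Lemma d_eq (f : R -> R) (x l l' : R) : is_derive f x l -> l = l' -> is_derive f x l'.
Proof. intros H ->; exact H. Qed.

Lemma c_sum (f : nat -> R -> R) x N :
  (forall i, (i <= N)%nat -> continuity_pt (f i) x) ->
  continuity_pt (fun t => sum_f_R0 (fun i => f i t) N) x.
Proof.
  induction N; intros H; simpl.
  - apply H; lia.
  - exact (continuity_pt_plus _ _ _ (IHN (fun i Hi => H i ltac:(lia))) (H (S N) ltac:(lia))).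
Qed.

Definition Fw N (a w : nat -> R) t s := sum_f_R0 (fun i => exp (t * w i) * exp (a i * s)) N.

Lemma Fw_derive N a w s t0 :
  is_derive (fun t => Fw N a w t s) t0
    (sum_f_R0 (fun i => w i * (exp (t0 * w i) * exp (a i * s))) N).
Proof.
  unfold Fw. apply (d_sum (fun i t => exp (t * w i) * exp (a i * s))). intros i Hi.
  eapply d_eq. apply (d_mult (fun t => exp (t * w i)) (fun _ => exp (a i * s))).
  apply (d_exp (fun t => t * w i)). apply d_lin. apply d_const. ring.
Qed.

Lemma sig_cont_pos N a w (sg : R -> R) : (forall i, (i <= N)%nat -> 0 < a i) ->
  (forall t, Fw N a w t (sg t) = 1) -> forall t0, continuity_pt sg t0.
Proof.
  intros Ha Heq t0.
  assert (mono : forall t s s', s < s' -> Fw N a w t s < Fw N a w t s').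
  { intros t s s' h. apply sum_lt. intros i Hi. apply Rmult_lt_compat_l. apply exp_pos.
    apply exp_increasing. specialize (Ha i Hi). nra. }
  assert (monole : forall t s s', s <= s' -> Fw N a w t s <= Fw N a w t s').
  { intros t s s' [h| ->]. now apply Rlt_le, mono. lra. }
  apply eps_cont. intros eps He.
  assert (up : 1 < Fw N a w t0 (sg t0 + eps)). { rewrite <- (Heq t0) at 1. apply mono; lra. }
  assert (lo : Fw N a w t0 (sg t0 - eps) < 1). { rewrite <- (Heq t0). apply mono; lra. }
  destruct (cont_eps _ _ (cont_of_derive _ _ _ (Fw_derive N a w (sg t0 + eps) t0))
     (Fw N a w t0 (sg t0 + eps) - 1)) as [d1 [Hd1 H1]]; [lra|].
  destruct (cont_eps _ _ (cont_of_derive _ _ _ (Fw_derive N a w (sg t0 - eps) t0))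
     (1 - Fw N a w t0 (sg t0 - eps))) as [d2 [Hd2 H2]]; [lra|].
  exists (Rmin d1 d2). split. apply Rmin_pos; auto.
  intros y Hy.
  assert (Hy1 : Rabs (y - t0) < d1) by (eapply Rlt_le_trans; [exact Hy| apply Rmin_l]).
  assert (Hy2 : Rabs (y - t0) < d2) by (eapply Rlt_le_trans; [exact Hy| apply Rmin_r]).
  specialize (H1 y Hy1). specialize (H2 y Hy2).
  apply Rabs_def2 in H1. apply Rabs_def2 in H2.
  apply Rabs_def1.
  - destruct (Rlt_or_le (sg y) (sg t0 + eps)) as [h|h]; [lra|].
    apply (monole y) in h. rewrite Heq in h. lra.
  - destruct (Rlt_or_le (sg t0 - eps) (sg y)) as [h|h]; [lra|].
    apply (monole y) in h. rewrite Heq in h. lra.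
Qed.

Lemma sig_cont N a w (sg : R -> R) : same_strict_sign N a ->
  (forall t, Fw N a w t (sg t) = 1) -> forall t0, continuity_pt sg t0.
Proof.
  intros [Ha|Ha] Heq t0. now apply (sig_cont_pos N a w).
  assert (C : continuity_pt (fun t => - sg t) t0).
  { apply (sig_cont_pos N (fun i => - a i) w). intros i Hi; specialize (Ha i Hi); lra.
    intros t. rewrite <- (Heq t). unfold Fw. apply sum_eq; intros. f_equal. f_equal. ring. }
  apply eps_cont; intros eps He. destruct (cont_eps _ _ C eps He) as [d [Hd H]].
  exists d; split; auto. intros y Hy. specialize (H y Hy).
  replace (sg y - sg t0) with (- (- sg y - - sg t0)) by ring. rewrite Rabs_Ropp; auto.
Qed.

Lemma Ef0 : Ef 0 = 1.
Proof. unfold Ef. destruct (Req_EM_T 0 0); lra. Qed.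

Lemma sig_deriv N a w (sg : R -> R) t0 : same_strict_sign N a ->
  (forall t, Fw N a w t (sg t) = 1) ->
  is_derive sg t0
   (- sum_f_R0 (fun i => w i * (exp (t0 * w i) * exp (a i * sg t0))) N /
      sum_f_R0 (fun i => a i * (exp (t0 * w i) * exp (a i * sg t0))) N).
Proof.
  intros Hs Heq.
  set (k := fun t => sum_f_R0 (fun i => a i * (exp (t * w i) * exp (a i * sg t0) *
                        Ef (a i * (sg t - sg t0)))) N).
  assert (kpos : forall t, k t <> 0).
  { intros t. apply sum_sign; auto. intros i Hi.
    apply Rmult_lt_0_compat. apply Rmult_lt_0_compat; apply exp_pos. apply Ef_pos. }
  assert (k0 : k t0 = sum_f_R0 (fun i => a i * (exp (t0 * w i) * exp (a i * sg t0))) N).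
  { unfold k. apply sum_eq; intros i Hi. rewrite Rminus_diag, Rmult_0_r, Ef0. ring. }
  rewrite <- k0.
  apply (dq sg (fun t => 1 - Fw N a w t (sg t0)) k).
  - intros t. apply Rmult_eq_reg_r with (r := k t); [|apply kpos].
    unfold Rdiv. rewrite Rmult_assoc, Rinv_l, Rmult_1_r by apply kpos.
    rewrite <- (Heq t). unfold Fw, k. rewrite <- minus_sum, scal_sum.
    apply sum_eq; intros i Hi.
    replace (exp (a i * sg t)) with (exp (a i * sg t0) * exp (a i * (sg t - sg t0)))
      by (rewrite <- exp_plus; f_equal; ring).
    assert (E := Ef_eq (a i * (sg t - sg t0))).
    replace (exp (a i * (sg t - sg t0))) with (1 + a i * (sg t - sg t0) * Ef (a i * (sg t - sg t0)))
      by lra.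
    ring.
  - rewrite Heq. ring.
  - eapply d_eq. apply d_minus. apply d_const. apply Fw_derive. ring.
  - unfold k. apply c_sum. intros i Hi.
    apply (continuity_pt_mult (fun _ => a i)). apply continuity_pt_const; intros ? ?; auto.
    apply (continuity_pt_mult (fun t => exp (t * w i) * exp (a i * sg t0))).
    eapply cont_of_derive. eapply (d_mult (fun t => exp (t * w i)) (fun _ => exp (a i * sg t0))).
    apply (d_exp (fun t => t * w i)). apply d_lin. apply d_const.
    apply (continuity_pt_comp (fun t => a i * (sg t - sg t0)) Ef).
    + apply (continuity_pt_mult (fun _ => a i)). apply continuity_pt_const; intros ? ?; auto.
      apply (continuity_pt_minus sg (fun _ => sg t0)). apply (sig_cont N a w); auto.
      apply continuity_pt_const; intros ? ?; auto.
    + rewrite Rminus_diag, Rmult_0_r. apply Ef_cont0.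
  - apply kpos.
Qed.

Lemma e_pos N a i : 0 < e_a N a i.
Proof. unfold e_a, C_a. apply Rmult_lt_0_compat; [lra|apply exp_pos]. Qed.

Lemma e_sum N a : same_strict_sign N a -> sumN N (e_a N a) = 1.
Proof. intros Hs. apply (t_a_spec N a (fun _ => 1)); auto. intros i _; lra. Qed.

Lemma A_nz N a : same_strict_sign N a -> sumN N (fun k => a k * e_a N a k) <> 0.
Proof. intros Hs. apply sum_sign; auto. intros; apply e_pos. Qed.

Lemma tangent_part N a l : same_strict_sign N a -> sumN N (Log_formula N a l) = 0.
Proof.
  intros Hs. assert (HA := A_nz N a Hs).
  set (A := sumN N (fun k => a k * e_a N a k)) in *.
  set (S := sumN N (fun j => e_a N a j * ln (l j))).
  unfold Log_formula. fold A. fold S. unfold sumN.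
  rewrite (sum_eq _ (fun i => e_a N a i * ln (l i) - (a i * e_a N a i) * (S / A))).
  2: { intros i Hi. field. exact HA. }
  rewrite minus_sum, <- scal_sum. fold (sumN N (fun i => e_a N a i * ln (l i))). fold S.
  fold (sumN N (fun i => a i * e_a N a i)). fold A. field. exact HA.
Qed.

Lemma add_lin (phi : R -> R) d : (forall s t, phi (s + t) = phi s + phi t) ->
  is_derive phi 0 d -> phi 1 = d.
Proof.
  intros Hadd Hd.
  assert (H0 : phi 0 = 0). { assert (E := Hadd 0 0). rewrite Rplus_0_l in E. lra. }
  assert (Ht : forall t, is_derive phi t d).
  { intros t. apply is_derive_ext with (f := fun u => phi t + phi (u - t)).
    { intros u. rewrite <- Hadd. f_equal. ring. }
    eapply d_eq. apply d_plus. apply d_const.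
    apply (d_comp phi (fun u => u - t)). rewrite Rminus_diag. exact Hd.
    eapply d_eq. apply d_minus. apply (d_id t). apply d_const. reflexivity.
    simpl. ring. }
  assert (Hpsi : forall x, is_derive (fun u => phi u - d * u) x 0).
  { intros x. eapply d_eq. apply d_minus. apply Ht. apply d_scal. apply (d_id x).
    simpl. ring. }
  destruct (MVT_gen (fun u => phi u - d * u) 0 1 (fun _ => 0)) as [c [_ Hc]].
  - intros; apply Hpsi.
  - intros x _. eapply cont_of_derive. apply Hpsi.
  - rewrite H0 in Hc. lra.
Qed.

Theorem theorem1 (N : nat) (a : nat -> R) :
  (1 <= N)%nat -> same_strict_sign N a ->
  forall l : nat -> R, simplex0 N l ->
    tangent0 N (Log_formula N a l) /\ Exp_is N a (Log_formula N a l) l.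
Proof.
  intros HN Hs l [Hlpos Hlsum].
  assert (HA := A_nz N a Hs).
  assert (Htan := tangent_part N a l Hs).
  split; [exact Htan|].
  set (A := sumN N (fun k => a k * e_a N a k)) in *.
  set (S := sumN N (fun j => e_a N a j * ln (l j))).
  assert (Hxi : forall i, (i <= N)%nat ->
     Log_formula N a l i * / e_a N a i = ln (l i) - a i / A * S).
  { intros i Hi. unfold Log_formula. fold A. fold S. field.
    split; [exact HA| apply Rgt_not_eq, e_pos]. }
  split.
  -
    set (w := fun i => ln (l i)).
    set (sg := fun t => t_a N a (fun i => exp (t * w i))).
    set (g := fun t => C_a N a (fun i => exp (t * w i))).
    assert (gE : forall t i, g t i = exp (t * w i) * exp (a i * sg t)) by reflexivity.
    assert (Heq : forall t, Fw N a w t (sg t) = 1).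
    { intros t. apply (t_a_spec N a (fun i => exp (t * w i))); auto.
      intros i _; apply exp_pos. }
    assert (sg0 : sg 0 = t_a N a (fun _ => 1)).
    { unfold sg. f_equal. apply functional_extensionality; intros i.
      rewrite Rmult_0_l; apply exp_0. }
    assert (sg1 : sg 1 = 0).
    { apply (uniq_t N a (fun i => exp (1 * w i))); auto.
      intros i _; apply exp_pos. apply Heq.
      transitivity (sumN N l); [|exact Hlsum]. unfold sumN. apply sum_eq; intros i Hi.
      unfold w. rewrite Rmult_1_l, exp_ln by (apply Hlpos; auto).
      rewrite Rmult_0_r, exp_0; ring. }
    assert (sgD : forall t, is_derive sg t
      (- sum_f_R0 (fun i => w i * (exp (t * w i) * exp (a i * sg t))) N /
       sum_f_R0 (fun i => a i * (exp (t * w i) * exp (a i * sg t))) N)).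
    { intros t. apply sig_deriv; auto. }
    assert (gD : forall t i, is_derive (fun u => g u i) t
      ((w i * exp (t * w i)) * exp (a i * sg t) + exp (t * w i) *
       ((a i * (- sum_f_R0 (fun i => w i * (exp (t * w i) * exp (a i * sg t))) N /
       sum_f_R0 (fun i => a i * (exp (t * w i) * exp (a i * sg t))) N)) * exp (a i * sg t)))).
    { intros t i. apply (d_mult (fun u => exp (u * w i)) (fun u => exp (a i * sg u))).
      apply (d_exp (fun u => u * w i)). apply d_lin.
      apply (d_exp (fun u => a i * sg u)). apply d_scal. apply sgD. }
    exists g. split; [|split].
    + split; [|split; [|split]].
      * intros t. split.
        -- intros i _. rewrite gE. apply Rmult_lt_0_compat; apply exp_pos.
        -- apply Heq.
      * intros i _. rewrite gE, sg0, Rmult_0_l, exp_0. unfold e_a, C_a. reflexivity.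
      * intros s t i Hi. unfold opC.
        set (T := t_a N a (fun j => g s j * g t j)).
        assert (HT : T = sg (s + t) - sg s - sg t).
        { apply (uniq_t N a (fun j => g s j * g t j)); auto.
          intros j _. rewrite !gE. apply Rmult_lt_0_compat; apply Rmult_lt_0_compat; apply exp_pos.
          apply t_a_spec; auto.
          intros j _. rewrite !gE. apply Rmult_lt_0_compat; apply Rmult_lt_0_compat; apply exp_pos.
          rewrite <- (Heq (s + t)). unfold sumN, Fw. apply sum_eq; intros j Hj.
          rewrite !gE. rewrite <- !exp_plus. f_equal. ring. }
        unfold C_a. fold T. rewrite HT, !gE. rewrite <- !exp_plus. f_equal. ring.
      * intros t i _. eexists. apply gD.
    + intros i Hi. eapply d_eq. apply gD.
      rewrite sg0, !Rmult_0_l, exp_0.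
      assert (E1 : sum_f_R0 (fun i => w i * (exp (0 * w i) * exp (a i * sg 0))) N = S).
      { unfold S, sumN. apply sum_eq; intros j Hj. rewrite sg0, Rmult_0_l, exp_0.
        unfold e_a, C_a, w. ring. }
      assert (E2 : sum_f_R0 (fun i => a i * (exp (0 * w i) * exp (a i * sg 0))) N = A).
      { unfold A, sumN. apply sum_eq; intros j Hj. rewrite sg0, Rmult_0_l, exp_0.
        unfold e_a, C_a. ring. }
      rewrite sg0 in E1, E2. rewrite E1, E2.
      unfold Log_formula. fold A. fold S. unfold e_a, C_a, w. field. exact HA.
    + intros i Hi. rewrite gE, sg1, Rmult_1_l, Rmult_0_r, exp_0, Rmult_1_r.
      unfold w. apply exp_ln, Hlpos, Hi.
  -
    intros g [Hsimp [H0 [Hhom Hder]]] Hvel i Hi.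
    assert (gpos : forall t j, (j <= N)%nat -> 0 < g t j).
    { intros t j Hj. apply (proj1 (Hsimp t)); auto. }
    set (e := e_a N a) in *.
    set (Q := fun t => sum_f_R0 (fun j => e j * ln (g t j)) N).
    assert (HQ : forall s t, Q (s + t) = Q s + Q t +
                   t_a N a (fun j => g s j * g t j) * A).
    { intros s t. unfold Q, A, sumN. rewrite scal_sum, <- !plus_sum. apply sum_eq; intros j Hj.
      rewrite Hhom by auto. unfold opC, C_a.
      rewrite !ln_mult, ln_exp; try apply Rmult_lt_0_compat; auto using exp_pos. ring. }
    assert (Hphi : forall m, (m <= N)%nat ->
      ln (g 1 m) - a m / A * Q 1 = ln (l m) - a m / A * S).
    { intros m Hm. rewrite <- (Hxi m Hm).
      set (phi := fun t => ln (g t m) - a m / A * Q t).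
      apply (add_lin phi).
      - intros s t. unfold phi. rewrite HQ. rewrite Hhom by auto. unfold opC, C_a.
        rewrite !ln_mult, ln_exp; try apply Rmult_lt_0_compat; auto using exp_pos.
        field. exact HA.
      - eapply d_eq. apply d_minus. apply d_ln. apply Hvel; auto. apply gpos; auto.
        apply d_scal. unfold Q.
        apply (d_sum (fun j t => e j * ln (g t j))
                (fun j => e j * (Log_formula N a l j * / g 0 j))). intros j Hj.
        apply d_scal. apply d_ln. apply Hvel; auto. apply gpos; auto.
        rewrite (sum_eq _ (Log_formula N a l)).
        2: { intros j Hj. rewrite H0 by auto. field. apply Rgt_not_eq, e_pos. }
        fold (sumN N (Log_formula N a l)). rewrite Htan, H0 by auto. fold e. ring. }
    set (c := (Q 1 - S) / A).
    assert (Hg1 : forall m, (m <= N)%nat -> g 1 m = l m * exp (a m * c)).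
    { intros m Hm. rewrite <- (exp_ln (g 1 m)) by auto. rewrite <- (exp_ln (l m)) at 1 by auto.
      rewrite <- exp_plus. f_equal. specialize (Hphi m Hm). unfold c.
      apply Rplus_eq_reg_r with (r := - (a m / A * Q 1)).
      transitivity (ln (l m) - a m / A * S). lra. field. exact HA. }
    assert (Hc : c = 0).
    { apply (uniq_t N a l); auto.
      rewrite <- (proj2 (Hsimp 1)). unfold sumN. apply sum_eq; intros j Hj. symmetry. auto.
      transitivity (sumN N l); [|exact Hlsum]. unfold sumN. apply sum_eq; intros j Hj. rewrite Rmult_0_r, exp_0; ring. }
    rewrite Hg1, Hc, Rmult_0_r, exp_0 by auto. ring.
Qed.
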